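(* Let $\alpha\in\ell^0(\mathbb{Z})$ with $\operatorname{supp}\alpha=I$, let $u=\sum_{i\in\mathbb{Z}}\alpha_i e_i$ be the source, $v=Ku$, and let $v^\varepsilon$ be noisy data with $\|v^\varepsilon-v\|\le\varepsilon$, with noise-to-signal ratio \[ r_{\varepsilon/\alpha}:=\frac{\sup_{i\in\mathbb{Z}}|\langle v^\varepsilon-v,d_i\rangle|}{\min_{i\in I}|\alpha_i|\,\|Ke_i\|}<\frac12. \] Suppose the $\varepsilon$ERC holds, i.e. $\sup_{i\in I}\sum_{j\in I,\,j\neq i}|\langle d_i,d_j\rangle|<1$ and \[ \sup_{d\in\mathscr{D}(I^\complement)}\big\|(DP_I)^\dagger d\big\|_{\ell^1}<1-2\,r_{\varepsilon/\alpha}\,\frac{1}{1-\sup_{i\in I}\sum_{j\in I,\,j\neq i}|\langle d_i,d_j\rangle|}. \] Then there exists a constant $C>0$ such that the approximate solution $\hat\alpha$ determined by OMP satisfies $\|\hat\alpha-\alpha\|_{\ell^1}\le C\varepsilon$.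
   Context: $B$ is a Banach space, $H$ a real Hilbert space, and $K:B\to H$ a bounded, injective, linear operator. $\mathscr{E}=\{e_i\}_{i\in\mathbb{Z}}\subset B$ is a family of unit-norm vectors, $d_i:=Ke_i/\|Ke_i\|$, $\mathscr{D}=\{d_i\}$, $\mathscr{E}(J)=\{e_i:i\in J\}$, $\mathscr{D}(J)=\{d_i:i\in J\}$ for $J\subset\mathbb{Z}$, $I^\complement=\mathbb{Z}\setminus I$. $D:\ell^1\to H$, $D\beta=\sum_i\beta_id_i$; $P_J$ is the coordinate projection onto $J$ in $\ell^1$; $(DP_I)^\dagger$ is the pseudoinverse of $DP_I$. Orthogonal Matching Pursuit (OMP) with parameter $\varepsilon$ on data $v^\varepsilon$: set $k=0$, $I^0=\emptyset$, $r^0=v^\varepsilon$, $\hat u^0=0$; while $\|r^k\|>\varepsilon$: $k:=k+1$, choose $i_k\in\operatorname{argsup}_i|\langle r^{k-1},d_i\rangle|$, $I^k=I^{k-1}\cup\{i_k\}$, $\hat u^k\in\operatorname{argmin}\{\|v^\varepsilon-K\hat u\|^2:\hat u\in\operatorname{span}\mathscr{E}(I^k)\}$, $r^k=v^\varepsilon-K\hat u^k$. The approximate solution $\hat\alpha$ is the coefficient vector of the final iterate, $\hat u=\sum_i\hat\alpha_ie_i$ (with $\hat\alpha_i=0$ for non-selected indices). *)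

(* Defs.v *)
From HB Require Import structures.
From Stdlib Require Import ClassicalEpsilon.
From mathcomp Require Import all_boot all_order all_algebra.
From mathcomp Require Import all_classical all_reals all_analysis.
Set Implicit Arguments. Unset Strict Implicit. Unset Printing Implicit Defensive.
Import Order.TTheory GRing.Theory Num.Theory.
Import numFieldNormedType.Exports.
Local Open Scope classical_set_scope.
Local Open Scope ring_scope.

Section Defs.
Variables (R : realType) (B H : normedModType R).

Definition is_inner_product (ip : H -> H -> R) : Prop :=
  (forall x y, ip x y = ip y x) /\
  (forall (a : R) x y z, ip (a *: x + y) z = a * ip x z + ip y z) /\
  (forall x, `|x| ^+ 2 = ip x x).

Definition dict (K : B -> H) (e : int -> B) (i : int) : H :=
  (`|K (e i)|)^-1 *: K (e i).

Definition l1norm (x : int -> R) : \bar R :=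
  (\esum_(i in [set: int]) (`|x i|)%:E)%E.

(* noise-to-signal ratio r_{eps/alpha} ; I : list of the (nonempty) support *)
Definition nsr (ip : H -> H -> R) (K : B -> H) (e : int -> B)
    (alpha : int -> R) (I : seq int) (w : H) : R :=
  sup (range (fun i => `|ip w (dict K e i)|)) /
  inf [set `|alpha i| * `|K (e i)| | i in [set i | i \in I]].

Definition cumcoh (ip : H -> H -> R) (d : int -> H) (I : seq int) : R :=
  sup [set \sum_(j <- I | j != i) `|ip (d i) (d j)| | i in [set i | i \in I]].

(* beta = (D P_I)^dagger h : beta supported on I and D P_I beta is the
   orthogonal projection of h onto span D(I) (normal equations). *)
Definition pinv_spec (ip : H -> H -> R) (d : int -> H) (I : seq int) (h : H)
    (beta : int -> R) : Prop :=
  (forall i, i \notin I -> beta i = 0) /\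
  (forall j, j \in I -> ip (h - \sum_(i <- I) beta i *: d i) (d j) = 0).

Definition pinv (ip : H -> H -> R) (d : int -> H) (I : seq int) (h : H) : int -> R :=
  epsilon (inhabits (fun _ : int => 0)) (pinv_spec ip d I h).

Definition erc_sup (ip : H -> H -> R) (d : int -> H) (I : seq int) : \bar R :=
  ereal_sup [set l1norm (pinv ip d I (d j)) | j in [set j | j \notin I]].

(* A complete run of OMP with parameter eps on data veps, performing n
   iterations, selecting indices idx = [i_1; ...; i_n], with coefficient
   vectors beta k (supported on I^k) of the iterates
   uhat^k = sum_{i in I^k} beta k i e_i. *)
Definition OMP_run (ip : H -> H -> R) (K : B -> H) (e : int -> B) (eps : R)
    (veps : H) (n : nat) (idx : seq int) (beta : nat -> int -> R) : Prop :=
  let d := dict K e in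
  let S k := undup (take k idx) in
  let uhat k := \sum_(i <- S k) beta k i *: e i in
  let res k := veps - K (uhat k) in
  [/\ size idx = n,
      (forall k, (k <= n)%N -> forall i, i \notin take k idx -> beta k i = 0),
      (forall k, (k < n)%N -> eps < `|res k|) /\ `|res n| <= eps,
      (forall k, (k < n)%N -> forall j,
          `|ip (res k) (d j)| <= `|ip (res k) (d (nth 0 idx k))|)
    & (forall k, (0 < k <= n)%N -> forall c : int -> R,
          `|veps - K (uhat k)| ^+ 2 <= `|veps - K (\sum_(i <- S k) c i *: e i)| ^+ 2)].

End Defs.

(* Main.v *)
Require Import Defs.
From HB Require Import structures.
From Stdlib Require Import ClassicalEpsilon.
From mathcomp Require Import all_boot all_order all_algebra.
From mathcomp Require Import all_classical all_reals all_analysis.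
From mathcomp Require Import ring lra.
Import Order.TTheory GRing.Theory Num.Theory.
Import numFieldNormedType.Exports.
Local Open Scope classical_set_scope.
Local Open Scope ring_scope.

Section IP.
Variables (R : realType) (H : normedModType R) (ip : H -> H -> R).
Hypothesis hip : is_inner_product ip.

Lemma ipC x y : ip x y = ip y x.
Proof. by case: hip. Qed.
Lemma ipxx x : ip x x = `|x| ^+ 2.
Proof. by case: hip => _ [_ ->]. Qed.
Lemma ip0l z : ip 0 z = 0.
Proof.
case: hip => _ [h _]; have := h 1 0 0 z.
rewrite scaler0 addr0 mul1r => /(congr1 (fun t => t - ip 0 z)).
by rewrite subrr addrK.
Qed.
Lemma ipDl x y z : ip (x + y) z = ip x z + ip y z.
Proof. by case: hip => _ [h _]; have := h 1 x y z; rewrite scale1r mul1r. Qed.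
Lemma ipZl a x z : ip (a *: x) z = a * ip x z.
Proof. by case: hip => _ [h _]; have := h a x 0 z; rewrite addr0 ip0l addr0. Qed.
Lemma ipNl x z : ip (- x) z = - ip x z.
Proof. by rewrite -scaleN1r ipZl mulN1r. Qed.
Lemma ipBl x y z : ip (x - y) z = ip x z - ip y z.
Proof. by rewrite ipDl ipNl. Qed.
Lemma ipDr x y z : ip z (x + y) = ip z x + ip z y.
Proof. by rewrite ipC ipDl !(ipC z). Qed.
Lemma ipZr a x z : ip z (a *: x) = a * ip z x.
Proof. by rewrite ipC ipZl ipC. Qed.
Lemma ipBr x y z : ip z (x - y) = ip z x - ip z y.
Proof. by rewrite ipC ipBl !(ipC z). Qed.
Lemma ip_suml (T : Type) (s : seq T) (F : T -> H) z :
  ip (\sum_(i <- s) F i) z = \sum_(i <- s) ip (F i) z.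
Proof.
elim: s => [|x s IH]; first by rewrite !big_nil ip0l.
by rewrite !big_cons ipDl IH.
Qed.
Lemma ip_sumr (T : Type) (s : seq T) (F : T -> H) z :
  ip z (\sum_(i <- s) F i) = \sum_(i <- s) ip z (F i).
Proof. by rewrite ipC ip_suml; apply: eq_bigr => i _; rewrite ipC. Qed.

Lemma ip_cs x y : `|y| = 1 -> `|ip x y| <= `|x|.
Proof.
move=> y1; set p := ip x y.
have : 0 <= ip (x - p *: y) (x - p *: y) by rewrite ipxx sqr_ge0.
rewrite ipBl !ipBr !ipZl !ipZr !ipxx y1 (ipC y x) -/p => h.
have h2 : `|p| ^+ 2 <= `|x| ^+ 2 by rewrite real_normK ?num_real //; lra.
have := normr_ge0 x; have := normr_ge0 p; nra.
Qed.

Lemma ip_norm0 x : ip x x = 0 -> x = 0.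
Proof. by rewrite ipxx => /eqP; rewrite sqrf_eq0 normr_eq0 => /eqP. Qed.

Lemma ip0r z : ip z 0 = 0.
Proof. by rewrite ipC ip0l. Qed.

Lemma proj_exists (d : int -> H) (L : seq int) (h : H) : uniq L ->
  exists b : int -> R, (forall i, i \notin L -> b i = 0) /\
    (forall j, j \in L -> ip (h - \sum_(i <- L) b i *: d i) (d j) = 0).
Proof.
elim: L h => [|x L IH] h.
  by move=> _; exists (fun _ => 0); split => // j; rewrite in_nil.
move=> /= /andP[xL uL].
have [b1 [b1s b1o]] := IH h uL.
have [b2 [b2s b2o]] := IH (d x) uL.
set r1 := h - \sum_(i <- L) b1 i *: d i.
set r2 := d x - \sum_(i <- L) b2 i *: d i.
set t := ip r1 r2 / ip r2 r2.
have key : ip r1 r2 - t * ip r2 r2 = 0.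
  have [z|nz] := eqVneq (ip r2 r2) 0.
    by rewrite z mulr0 subr0 (ip_norm0 _ z) ip0r.
  by rewrite /t divfK // subrr.
exists (fun i => if i == x then t else b1 i - t * b2 i); split.
  move=> i; rewrite in_cons negb_or => /andP[ix iL].
  by rewrite (negPf ix) b1s // b2s // mulr0 subr0.
have -> : h - \sum_(i <- x :: L) (if i == x then t else b1 i - t * b2 i) *: d i
    = r1 - t *: r2.
  rewrite big_cons eqxx (eq_big_seq (fun i => b1 i *: d i - t *: (b2 i *: d i))).
    rewrite sumrB -scaler_sumr /r1 /r2 scalerBr; set S1 := \sum_(_ <- _) _.
    set S2 := \sum_(_ <- _) _. by rewrite !opprD !opprK !addrA (addrAC h (- (t *: d x))).
  move=> i iL; have -> : (i == x) = false.
    by apply/negP => /eqP ix; move: xL; rewrite -ix iL.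
  by rewrite scalerBl scalerA.
have orthL j : j \in L -> ip (r1 - t *: r2) (d j) = 0.
  by move=> jL; rewrite ipBl ipZl b1o // b2o // mulr0 subr0.
move=> j; rewrite in_cons => /orP[/eqP ->|]; last exact: orthL.
have -> : d x = r2 + \sum_(i <- L) b2 i *: d i by rewrite /r2 subrK.
rewrite ipDr ip_sumr big1_seq ?addr0.
  by rewrite ipBl ipZl.
by move=> i /andP[_ iL]; rewrite ipZr orthL // mulr0.
Qed.

Lemma argmax_seq (T : eqType) (f : T -> R) (s : seq T) : s != [::] ->
  exists2 m, m \in s & forall k, k \in s -> f k <= f m.
Proof.
elim: s => // x s IH _.
have [->|ns] := eqVneq s [::].
  by exists x; rewrite ?mem_head // => k; rewrite inE => /eqP ->.
have [m ms hm] := IH ns.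
have [le|lt] := leP (f x) (f m).
  exists m; first by rewrite inE ms orbT.
  by move=> k; rewrite inE => /orP[/eqP ->|/hm].
exists x; first exact: mem_head.
move=> k; rewrite inE => /orP[/eqP ->//|/hm h]; apply: (le_trans h); exact: ltW.
Qed.

Lemma le_elem_sum (T : eqType) (F : T -> R) (s : seq T) x : uniq s -> x \in s ->
  (forall i, i \in s -> 0 <= F i) -> F x <= \sum_(i <- s) F i.
Proof.
move=> us xs F0; rewrite (bigD1_seq x) //= lerDl.
by rewrite big_seq_cond; apply: sumr_ge0 => i /andP[/F0].
Qed.

Lemma cumcoh_ub (d : int -> H) (I : seq int) i : uniq I -> i \in I ->
  \sum_(j <- I | j != i) `|ip (d i) (d j)| <= cumcoh ip d I.
Proof.
move=> uI iI; apply: ub_le_sup; last by exists i.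
exists (\sum_(i <- I) \sum_(j <- I | j != i) `|ip (d i) (d j)|).
move=> _ [k kI <-] /=.
apply: (@le_elem_sum _ (fun k => \sum_(j <- I | j != k) `|ip (d k) (d j)|) I k uI kI).
by move=> l _; apply: sumr_ge0.
Qed.

Lemma gram_lb (d : int -> H) (I : seq int) (y : int -> R) (Q : R) :
  uniq I -> (forall i, i \in I -> `|d i| = 1) -> cumcoh ip d I <= 1 ->
  (forall i, i \in I -> `|ip (\sum_(k <- I) y k *: d k) (d i)| <= Q) ->
  forall k, k \in I -> (1 - cumcoh ip d I) * `|y k| <= Q.
Proof.
move=> uI d1 mu1 hQ k kI.
have [m mI hm] : exists2 m, m \in I & forall k, k \in I -> `|y k| <= `|y m|.
  by apply: argmax_seq; apply/eqP => I0; rewrite I0 in kI.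
set mu := cumcoh ip d I.
have hmu := cumcoh_ub d I m uI mI.
set S := \sum_(j <- I | j != m) y j * ip (d j) (d m).
have eq1 : ip (\sum_(k <- I) y k *: d k) (d m) = y m + S.
  rewrite ip_suml (bigD1_seq m) //= ipZl ipxx d1 // expr1n mulr1.
  by congr (_ + _); apply: eq_bigr => j _; rewrite ipZl.
have hS : `|S| <= `|y m| * mu.
  apply: (le_trans (ler_norm_sum _ _ _)).
  apply: (le_trans _ (ler_wpM2l (normr_ge0 _) hmu)).
  rewrite mulr_sumr big_seq_cond [X in _ <= X]big_seq_cond.
  apply: ler_sum => j /andP[jI _]; rewrite normrM (ipC (d j)).
  by apply: ler_wpM2r => //; apply: hm.
have h1 : `|y m| <= Q + `|y m| * mu.
  have := hQ m mI; rewrite eq1 => hQ'.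
  have := ler_normB (y m + S) S; rewrite addrK => h.
  apply: (le_trans h); exact: lerD.
have h2 : (1 - mu) * `|y k| <= (1 - mu) * `|y m|.
  by apply: ler_wpM2l; [rewrite subr_ge0 | apply: hm].
apply: (le_trans h2); lra.
Qed.
End IP.
Arguments ipC {R H ip}. Arguments ipxx {R H ip}. Arguments ip0l {R H ip}.
Arguments ipDl {R H ip}. Arguments ipZl {R H ip}. Arguments ipNl {R H ip}.
Arguments ipBl {R H ip}. Arguments ipDr {R H ip}. Arguments ipZr {R H ip}.
Arguments ipBr {R H ip}. Arguments ip_suml {R H ip}. Arguments ip_sumr {R H ip}.
Arguments ip_cs {R H ip}. Arguments ip_norm0 {R H ip}. Arguments ip0r {R H ip}.
Arguments proj_exists {R H ip}. Arguments cumcoh_ub {R H ip}. Arguments gram_lb {R H ip}.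
Arguments argmax_seq {R}. Arguments le_elem_sum {R}.


Lemma l1norm_fin (R : realType) (f : int -> R) (I : seq int) : uniq I ->
  (forall i, i \notin I -> f i = 0) -> l1norm f = (\sum_(i <- I) `|f i|)%:E.
Proof.
move=> uI f0; rewrite /l1norm.
have -> : (\esum_(i in [set: int]) (`|f i|)%:E)%E = (\esum_(i in [set` I]) (`|f i|)%:E)%E.
  rewrite [in RHS]esum_mkcond; apply: eq_esum => i _.
  case: ifPn => // /negP iI; rewrite f0 ?normr0 //.
  by apply/negP => iI'; apply: iI; rewrite inE.
rewrite esum_fset; last by move=> i _; rewrite lee_fin.
  by rewrite -fsbig_seq // sumEFin.
exact: finite_seq.
Qed.

Lemma sum_sub (V : zmodType) (S I : seq int) (F : int -> V) :
  uniq S -> uniq I -> {subset S <= I} ->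
  (forall l, l \in I -> l \notin S -> F l = 0) ->
  \sum_(l <- S) F l = \sum_(l <- I) F l.
Proof.
move=> uS uI sSI F0.
rewrite [RHS](bigID (fun l => l \in S)) /= [X in _ = _ + X]big1_seq ?addr0.
  rewrite -[RHS]big_filter; apply: perm_big; apply: uniq_perm => //.
    exact: filter_uniq.
  by move=> l; rewrite mem_filter; case lS: (l \in S) => //=; rewrite sSI.
by move=> l /andP[lS lI]; apply: F0.
Qed.


Theorem proposition12 (R : realType) (B H : completeNormedModType R)
  (ip : H -> H -> R) (hip : is_inner_product ip)
  (K : {linear B -> H})
  (Kbdd : exists M : R, forall x : B, `|K x| <= M * `|x|)
  (Kinj : injective K)
  (e : int -> B) (he : forall i, `|e i| = 1)
  (alpha : int -> R) (I : seq int) (Iuniq : uniq I) (Ine : I != [::])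
  (hI : forall i, (i \in I) = (alpha i != 0)) :
  exists C : R, 0 < C /\
  forall (eps : R) (veps : H),
    let u := \sum_(i <- I) alpha i *: e i in
    let v := K u in
    let d := dict K e in
    let r := nsr ip K e alpha I (veps - v) in
    let mu := cumcoh ip d I in
    `|veps - v| <= eps ->
    r < 2^-1 ->
    mu < 1 ->
    (erc_sup ip d I < (1 - 2 * r * (1 - mu)^-1)%R%:E)%E ->
    forall (n : nat) (idx : seq int) (beta : nat -> int -> R),
      OMP_run ip K e eps veps n idx beta ->
      (l1norm (fun i => (beta n i - alpha i)%R) <= (C * eps)%R%:E)%E.
Proof.
set d := dict K e.
set nk := fun i => `|K (e i)|.
have nk0 i : 0 < nk i.
  rewrite /nk normr_gt0; apply/eqP => h.
  have : e i = 0 by apply: Kinj; rewrite h linear0.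
  by move=> ei; move: (he i); rewrite ei normr0 => /eqP; rewrite eq_sym oner_eq0.
have Ked i : K (e i) = nk i *: d i.
  by rewrite /d /dict scalerA divff ?scale1r // gt_eqF.
have dn i : `|d i| = 1.
  by rewrite /d /dict normrZ ger0_norm ?invr_ge0 // mulVf // gt_eqF //; apply: nk0.
have KS (s : seq int) (F : int -> B) :
    K (\sum_(i <- s) F i) = \sum_(i <- s) K (F i) by rewrite raddf_sum.
have KZ a x : K (a *: x) = a *: K x by rewrite linearZ.
set mu0 := cumcoh ip d I.
set C0 := 2 * (\sum_(i <- I) (nk i)^-1) / (1 - mu0).
exists (if mu0 < 1 then C0 + 1 else 1); split.
  case: ifP => // hmu0; rewrite ltr_wpDl //.
  apply: divr_ge0; last by rewrite subr_ge0 ltW. apply: mulr_ge0 => //; apply: sumr_ge0 => i _.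
  by rewrite invr_ge0 ltW.
move=> eps veps u v d' r mu heps hr hmu herc n idx beta hrun.
have hmu0 : mu0 < 1 := hmu. rewrite hmu0.
have m0 : 0 < 1 - mu0 by rewrite subr_gt0.
have mule1 : mu0 <= 1 by exact: ltW.
have eps0 : 0 <= eps := le_trans (normr_ge0 _) heps.
case: hrun => hsize hsupp [hres hresn] hsel hmin.
set w := veps - v.
have hv : v = \sum_(i <- I) (alpha i * nk i) *: d i.
  rewrite /v /u KS; apply: eq_bigr => i _; rewrite KZ Ked scalerA.
  by [].
set nu := sup (range (fun i => `|ip w (d i)|)).
have hnu i : `|ip w (d i)| <= nu.
  apply: ub_le_sup; last by exists i.
  exists `|w|; move=> _ [j _ <-]; exact: (ip_cs hip _ _ (dn j)).
have nu0 : 0 <= nu := le_trans (normr_ge0 _) (hnu 0).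
set A := inf [set `|alpha i| * `|K (e i)| | i in [set i | i \in I]].
have hA i : i \in I -> A <= `|alpha i| * nk i.
  move=> iI; apply: ge_inf; last by exists i.
  by exists 0 => _ [j _ <-]; rewrite mulr_ge0.
have [m mI hm] := argmax_seq _ (fun i => - (`|alpha i| * nk i)) I Ine.
have A0 : 0 < A.
  have : `|alpha m| * nk m <= A.
    apply: lb_le_inf; first by exists (`|alpha m| * nk m), m.
    by move=> _ [j jI <-]; have := hm j jI; rewrite lerN2.
  apply: lt_le_trans; rewrite mulr_gt0 // normr_gt0 -hI //.
have hrA : r = nu / A := erefl.
have hnuA : nu = r * A by rewrite hrA divfK // gt_eqF.
have r0 : 0 <= r by rewrite hrA divr_ge0 // ltW.
have herc' j : j \notin I ->
    \sum_(i <- I) `|Defs.pinv ip d I (d j) i| < 1 - 2 * r / (1 - mu0) /\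
    pinv_spec ip d I (d j) (Defs.pinv ip d I (d j)).
  move=> jI.
  have hs : pinv_spec ip d I (d j) (Defs.pinv ip d I (d j)).
    rewrite /Defs.pinv; apply: epsilon_spec.
    have [b [b1 b2]] := proj_exists hip d I (d j) Iuniq; by exists b.
  split => //.
  rewrite -lte_fin -(l1norm_fin _ _ _ Iuniq); last by case: hs.
  apply: le_lt_trans herc; apply: ereal_sup_ubound; by exists j.
have [eta [eta0 etao]] := proj_exists hip d I w Iuniq.
have eta_eq i : i \in I -> ip (\sum_(k <- I) eta k *: d k) (d i) = ip w (d i).
  move=> iI; have := etao i iI; rewrite (ipBl hip) => /eqP; rewrite subr_eq0 => /eqP ->.
  by [].
have heta k : k \in I -> (1 - mu0) * `|eta k| <= nu.
  apply: (gram_lb hip d I eta nu Iuniq (fun i _ => dn i) mule1) => i iI.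
  by rewrite eta_eq //; apply: hnu.
have KUk k : (k <= n)%N -> (forall i, i \in take k idx -> i \in I) ->
    K (\sum_(i <- undup (take k idx)) beta k i *: e i) =
    \sum_(l <- I) (beta k l * nk l) *: d l.
  move=> kn hk.
  rewrite (sum_sub _ (undup (take k idx)) I _ (undup_uniq _) Iuniq).
  - rewrite KS; apply: eq_bigr => i _; rewrite KZ Ked scalerA.
    by [].
  - by move=> l; rewrite mem_undup => /hk.
  - by move=> l _; rewrite mem_undup => lT; rewrite hsupp // scale0r.
have sel : forall k, (k <= n)%N -> forall i, i \in take k idx -> i \in I.
  elim => [|k IH] kn i9; first by rewrite take0.
  have kn' : (k < n)%N := kn.
  have IHk := IH (ltnW kn').
  rewrite (take_nth 0) ?hsize // mem_rcons in_cons => /orP[/eqP ->|]; last exact: IHk.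
  set s := nth 0 idx k.
  apply/negPn/negP => sI.
  set T := take k idx.
  have KU := KUk k (ltnW kn') IHk.
  set res := veps - K (\sum_(i <- undup T) beta k i *: e i).
  have hresk : eps < `|res| := hres k kn'.
  set Q := `|ip res (d s)|.
  have hQ j : `|ip res (d j)| <= Q := hsel k kn' j.
  have [i0 i0I i0T] : exists2 i0, i0 \in I & i0 \notin T.
    case: (boolP (all (mem T) I)) => hall; last by apply/allPn.
    exfalso.
    have k0 : (0 < k)%N.
      rewrite lt0n; apply/negP => /eqP k0; move: Ine hall.
      by rewrite /T k0 take0; case: (I) => //= x l _; rewrite in_nil.
    have := hmin k (introT andP (conj k0 (ltnW kn'))) alpha.
    rewrite (sum_sub _ (undup T) I (fun i => alpha i *: e i) (undup_uniq _) Iuniq).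
    - rewrite -/u -/v -/w -/res => hle.
      have : `|res| <= eps.
        have := normr_ge0 res; have := normr_ge0 w; nra.
      by rewrite leNgt hresk.
    - by move=> l; rewrite mem_undup => /IHk.
    - by move=> l lI; rewrite mem_undup => /negP; case; exact: (allP hall).
  set g := fun l => alpha l * nk l - beta k l * nk l.
  have resw : res = w + \sum_(l <- I) g l *: d l.
    rewrite /res KU /g.
    under [X in _ = _ + X]eq_bigr => l _ do rewrite scalerBl.
    by rewrite sumrB -hv /w addrA subrK.
  set c := fun l => eta l + g l.
  have resc : res = (w - \sum_(l <- I) eta l *: d l) + \sum_(l <- I) c l *: d l.
    rewrite resw /c.
    under [X in _ = _ + X]eq_bigr => l _ do rewrite scalerDl.
    by rewrite big_split /= addrA subrK.
  have orth i1 : i1 \in I -> ip res (d i1) = ip (\sum_(l <- I) c l *: d l) (d i1).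
    by move=> iI; rewrite resc (ipDl hip) etao // add0r.
  have hc : (1 - mu0) * `|c i0| <= Q.
    apply: (gram_lb hip d I c Q Iuniq (fun i _ => dn i) mule1) => // i1 iI.
    by rewrite -orth //; apply: hQ.
  have ci0 : c i0 = alpha i0 * nk i0 + eta i0.
    by rewrite /c /g hsupp ?(ltnW kn') // mul0r subr0 addrC.
  have hAc : A - `|eta i0| <= `|c i0|.
    rewrite ci0; have := hA i0 i0I.
    have := ler_normB (alpha i0 * nk i0 + eta i0) (eta i0).
    rewrite addrK normrM (gtr0_norm (nk0 i0)); lra.
  have [Eb hs] := herc' s sI.
  case: hs => b0 bo.
  set bb := Defs.pinv ip d I (d s).
  set Eb' := \sum_(i <- I) `|bb i|.
  have z0o : ip (\sum_(l <- I) g l *: d l) (d s - \sum_(i <- I) bb i *: d i) = 0.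
    rewrite (ip_suml hip) big1_seq // => l /andP[_ lI].
    by rewrite (ipZl hip) (ipC hip) bo // mulr0.
  have e1 : ip (\sum_(l <- I) g l *: d l) (d s) =
      ip (\sum_(l <- I) g l *: d l) (\sum_(i <- I) bb i *: d i).
    by move/eqP: z0o; rewrite (ipBr hip) subr_eq0 => /eqP.
  have eqs : ip res (d s) =
      ip w (d s) + \sum_(i <- I) bb i * (ip res (d i) - ip w (d i)).
    rewrite {1}resw (ipDl hip) e1 (ip_sumr hip); congr (_ + _); apply: eq_bigr => i _.
    rewrite (ipZr hip) resw (ipDl hip). by rewrite addrAC subrr add0r.
  have hQ2 : Q <= nu + Eb' * (Q + nu).
    rewrite {1}/Q eqs.
    apply: (le_trans (ler_normD _ _)); apply: lerD; first exact: hnu.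
    rewrite /Eb' mulr_suml; apply: (le_trans (ler_norm_sum _ _ _)); apply: ler_sum => i _.
    rewrite normrM; apply: ler_wpM2l => //.
    apply: (le_trans (ler_normB _ _)); apply: lerD; [exact: hQ | exact: hnu].
  have L1 : (1 - mu0) * A - nu <= Q.
    have := ler_wpM2l (ltW m0) hAc; rewrite mulrBr.
    have := heta i0 i0I; lra.
  have E2 : (1 - mu0) * Eb' < (1 - mu0) - 2 * r.
    have h := Eb; rewrite -(ltr_pM2l m0) in h; move: h.
    by rewrite mulrBr mulr1 mulrCA divff ?gt_eqF // mulr1.
  have Eb0 : 0 <= Eb' by apply: sumr_ge0.
  have E1 : 0 <= 1 - Eb' by nra.
  have P1 := ler_wpM2r E1 L1.
  have P3 : 0 < A * ((1 - mu0) * (1 - Eb') - 2 * r) by apply: mulr_gt0 => //; lra.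
  rewrite hnuA in P1 hQ2; nra.
have tn : take n idx = idx by rewrite take_oversize ?hsize.
have allI i : i \in idx -> i \in I by rewrite -tn; apply: sel.
set x := fun i => beta n i - alpha i.
have x0 i : i \notin I -> x i = 0.
  move=> iI; rewrite /x hsupp //; last by rewrite tn; apply/negP => /allI; apply/negP.
  suff -> : alpha i = 0 by rewrite subrr.
  by apply/eqP; move: iI; rewrite hI negbK.
rewrite (l1norm_fin _ _ _ Iuniq x0) lee_fin.
have KUn := KUk n (leqnn n) (sel n (leqnn n)).
set z := \sum_(l <- I) (x l * nk l) *: d l.
have hz : z = (veps - v) - (veps - K (\sum_(i <- undup (take n idx)) beta n i *: e i)).
  rewrite KUn hv /z /x.
  under eq_bigr => l _ do rewrite mulrBl scalerBl.
  by rewrite sumrB opprB [RHS]addrC addrA addrNK.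
have hzn : `|z| <= eps + eps.
  rewrite hz; apply: (le_trans (ler_normB _ _)); apply: lerD => //.
have hx l : l \in I -> (1 - mu0) * `|x l * nk l| <= eps + eps.
  apply: (gram_lb hip d I (fun l => x l * nk l) (eps + eps) Iuniq (fun i _ => dn i) mule1).
  move=> i iI; apply: le_trans hzn; exact: (ip_cs hip _ _ (dn i)).
have hx' l : l \in I -> `|x l| <= eps * (2 * (nk l)^-1 / (1 - mu0)).
  move=> lI; have := hx l lI; rewrite normrM (gtr0_norm (nk0 l)) => h.
  have nkl := nk0 l.
  have -> : eps * (2 * (nk l)^-1 / (1 - mu0)) = (eps + eps) / ((1 - mu0) * nk l).
    by field; rewrite ?gt_eqF.
  rewrite ler_pdivlMr ?mulr_gt0 //; lra.
rewrite [X in X <= _]big_seq.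
apply: (@le_trans _ _ (\sum_(l <- I | l \in I) eps * (2 * (nk l)^-1 / (1 - mu0)))).
  by apply: ler_sum => l lI; apply: hx'.
rewrite -big_seq -mulr_sumr -mulr_suml -mulr_sumr -/C0.
by rewrite mulrC mulrDl mul1r lerDl.
Qed.
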